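(* Let $\{x_i\}_{i\in[N]}$ be the global solution of the delayed consensus system described in the context. Then for almost all $t>2\tau$, \[ \frac{\mathrm d}{\mathrm dt}d_x(t)\le 2\int_{t-\tau}^t d_x(s-\tau)\,\mathrm ds+2\int_{t-\sigma}^t d_x(s-\tau)\,\mathrm ds+2\int_{t-\tau}^t\int_{s-\tau}^s\max_{l\in[N]}|\dot x_l(r)|\,\mathrm dr\,\mathrm ds+2\int_{t-\sigma}^t\int_{s-\tau}^s\max_{l\in[N]}|\dot x_l(r)|\,\mathrm dr\,\mathrm ds-N\underline a(t)d_x(t), \] where $\underline a(t):=\min_{i,j\in[N]}a_{ij}(t)$.
   Context: Let $N\ge2$, $d\ge1$ be integers, $[N]=\{1,\dots,N\}$, $0\le\sigma\le\tau$. Let $\psi:[0,\infty)\to[0,\infty)$ be continuous, nonincreasing, positive everywhere, with $\sup\psi\le1$. Given $x_i^0\in C([-\tau,0],\mathbb{R}^d)$, $\{x_i\}$ is the global solution (continuous on $[-\tau,\infty)$, continuously differentiable on $[0,\infty)$) of $\dot x_i(t)=\sum_{j\ne i}a_{ij}(t)(x_j(t-\tau)-x_i(t-\sigma))$ for $t>0$, with $a_{ij}(t)=\frac1{N-1}\psi(|x_i(t-\sigma)-x_j(t-\tau)|)$ for all $i,j\in[N]$, and $x_i=x_i^0$ on $[-\tau,0]$. $d_x(t):=\max_{i,j\in[N]}|x_i(t)-x_j(t)|$. *)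

(* Defs.v *)
From HB Require Import structures.
From mathcomp Require Import all_boot all_order all_algebra.
From mathcomp Require Import all_classical all_reals all_analysis.
Set Implicit Arguments. Unset Strict Implicit. Unset Printing Implicit Defensive.
Import Order.TTheory GRing.Theory Num.Theory.
Import numFieldNormedType.Exports.
Local Open Scope classical_set_scope.
Local Open Scope ring_scope.

Section Defs.
Variable R : realType.

Definition enorm (d : nat) (v : 'rV[R]_d) : R :=
  Num.sqrt (\sum_(k < d) (v ord0 k) ^+ 2).

(* minimum of a function over a finite type (0 if the type is empty) *)
Definition fmin (T : finType) (f : T -> R) : R :=
  if [pick i : T] is Some i0 then \big[Num.min/f i0]_(i : T) f i else 0.

Definition aij (N d : nat) (psi : R -> R) (sigma tau : R)
  (x : 'I_N -> R -> 'rV[R]_d) (i j : 'I_N) (t : R) : R :=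
  (N.-1%:R)^-1 * psi (enorm (x i (t - sigma) - x j (t - tau))).

Definition amin (N d : nat) (psi : R -> R) (sigma tau : R)
  (x : 'I_N -> R -> 'rV[R]_d) (t : R) : R :=
  fmin (fun p : 'I_N * 'I_N => aij psi sigma tau x p.1 p.2 t).

Definition diam (N d : nat) (x : 'I_N -> R -> 'rV[R]_d) (t : R) : R :=
  \big[Num.max/0]_(i < N) \big[Num.max/0]_(j < N) enorm (x i t - x j t).

Definition maxvel (N d : nat) (x : 'I_N -> R -> 'rV[R]_d) (r : R) : R :=
  \big[Num.max/0]_(l < N) enorm ('D_1 (x l) r).

End Defs.

(* Main.v *)
Require Import Defs.
From HB Require Import structures.
From mathcomp Require Import all_boot all_order all_algebra.
From mathcomp Require Import all_classical all_reals all_analysis.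
From mathcomp Require Import ring lra.
Import Order.TTheory GRing.Theory Num.Theory.
Import numFieldNormedType.Exports.
Local Open Scope classical_set_scope.
Local Open Scope ring_scope.
Section Alg.
Variable R : realType.
Variable d : nat.
Implicit Types u w : 'rV[R]_d.

Definition dot u w : R := \sum_(k < d) u ord0 k * w ord0 k.

Lemma enormE u : enorm u = Num.sqrt (dot u u).
Proof. by rewrite /enorm /dot; under eq_bigr do rewrite expr2. Qed.

Lemma dot_ge0 u : 0 <= dot u u.
Proof. by apply: sumr_ge0 => k _; rewrite -expr2 sqr_ge0. Qed.

Lemma enorm_ge0 u : 0 <= enorm u.
Proof. exact: sqrtr_ge0. Qed.

Lemma enorm_sq u : enorm u ^+ 2 = dot u u.
Proof. by rewrite enormE sqr_sqrtr // dot_ge0. Qed.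

Lemma dotC u w : dot u w = dot w u.
Proof. by apply: eq_bigr => k _; rewrite mulrC. Qed.

Lemma dot_eq0 u : dot u u = 0 -> forall k, u ord0 k = 0.
Proof.
move=> h k; have /psumr_eq0P H : \sum_(k < d) u ord0 k * u ord0 k = 0 by [].
have H0 : forall i : 'I_d, true -> 0 <= u ord0 i * u ord0 i.
  by move=> i _; rewrite -expr2 sqr_ge0.
have := H H0 k isT.
by rewrite -expr2 => /eqP; rewrite sqrf_eq0 => /eqP.
Qed.

Lemma dot0l u w : (forall k, u ord0 k = 0) -> dot u w = 0.
Proof. by move=> h; apply: big1 => k _; rewrite h mul0r. Qed.

Lemma dotDr u w1 w2 : dot u (w1 + w2) = dot u w1 + dot u w2.
Proof. by rewrite /dot -big_split; apply: eq_bigr => k _; rewrite mxE mulrDr. Qed.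

Lemma dotNr u w : dot u (- w) = - dot u w.
Proof. by rewrite /dot -sumrN; apply: eq_bigr => k _; rewrite mxE mulrN. Qed.

Lemma dotBr u w1 w2 : dot u (w1 - w2) = dot u w1 - dot u w2.
Proof. by rewrite dotDr dotNr. Qed.

Lemma dotZr u a w : dot u (a *: w) = a * dot u w.
Proof. by rewrite /dot mulr_sumr; apply: eq_bigr => k _; rewrite mxE; ring. Qed.

Lemma dot_sumr (I : Type) (r : seq I) (P : pred I) u (F : I -> 'rV[R]_d) :
  dot u (\sum_(i <- r | P i) F i) = \sum_(i <- r | P i) dot u (F i).
Proof.
elim: r => [|a r IH]; first by rewrite !big_nil dotC; apply: dot0l => k; rewrite mxE.
rewrite !big_cons; case: (P a) => //; by rewrite dotDr IH.
Qed.

Lemma dot_CS u w : dot u w <= enorm u * enorm w.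
Proof.
set a := enorm u; set b := enorm w.
have a0 : 0 <= a by exact: enorm_ge0.
have b0 : 0 <= b by exact: enorm_ge0.
have ha : dot u u = a ^+ 2 by rewrite enorm_sq.
have hb : dot w w = b ^+ 2 by rewrite enorm_sq.
have key : 0 <= \sum_(k < d) (b * u ord0 k - a * w ord0 k) ^+ 2.
  by apply: sumr_ge0 => k _; exact: sqr_ge0.
have E : \sum_(k < d) (b * u ord0 k - a * w ord0 k) ^+ 2 =
   b ^+ 2 * dot u u - 2 * a * b * dot u w + a ^+ 2 * dot w w.
  rewrite /dot !mulr_sumr -sumrB -big_split /=; apply: eq_bigr => k _; ring.
rewrite E ha hb in key.
have [ab0|ab0] := eqVneq (a * b) 0.
  move/eqP: ab0; rewrite mulf_eq0 => /orP[] /eqP a0'.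
    rewrite a0' mul0r dot0l // => k; apply: dot_eq0; by rewrite ha a0' expr0n.
  rewrite a0' mulr0 dotC dot0l // => k; apply: dot_eq0; by rewrite hb a0' expr0n.
have abp : 0 < a * b by rewrite lt_def ab0 /=; exact: mulr_ge0.
have : 0 <= (2 * (a * b)) * (a * b - dot u w).
  by apply: le_trans key _; rewrite le_eqVlt; apply/orP; left; apply/eqP; ring.
by rewrite pmulr_rge0 ?subr_ge0 // mulr_gt0.
Qed.

Lemma enormD u w : enorm (u + w) <= enorm u + enorm w.
Proof.
rewrite enormE -(@ger0_norm _ (enorm u + enorm w)); last by rewrite addr_ge0 ?enorm_ge0.
rewrite -sqrtr_sqr; apply: ler_wsqrtr.
have -> : dot (u + w) (u + w) = dot u u + 2 * dot u w + dot w w.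
  rewrite !dotDr (dotC (u + w) u) (dotC (u + w) w) !dotDr (dotC w u); ring.
rewrite -!enorm_sq.
have := dot_CS u w; set c := dot u w => hc.
rewrite sqrrD lerD2r lerD2l mulr2n; lra.
Qed.

Lemma enormN u : enorm (- u) = enorm u.
Proof. by rewrite !enormE /dot; congr Num.sqrt; apply: eq_bigr => k _; rewrite mxE mulrNN. Qed.

Lemma enormB u w : enorm (u - w) = enorm (w - u).
Proof. by rewrite -enormN opprB. Qed.

Lemma enorm0 : enorm (0 : 'rV[R]_d) = 0.
Proof. by rewrite enormE dot0l ?sqrtr0 // => k; rewrite mxE. Qed.

Lemma enormZ a u : enorm (a *: u) = `|a| * enorm u.
Proof.
rewrite !enormE -sqrtr_sqr -sqrtrM ?sqr_ge0 //; congr Num.sqrt.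
rewrite dotZr dotC dotZr; ring.
Qed.

Lemma enorm_sum (I : Type) (r : seq I) (P : pred I) (F : I -> 'rV[R]_d) :
  enorm (\sum_(i <- r | P i) F i) <= \sum_(i <- r | P i) enorm (F i).
Proof.
elim: r => [|a r IH]; first by rewrite !big_nil enorm0.
rewrite !big_cons; case: (P a) => //.
by apply: le_trans (enormD _ _) _; rewrite lerD2l.
Qed.

End Alg.
Arguments dot {R d}.
Arguments enormE {R d}. Arguments dot_ge0 {R d}. Arguments enorm_ge0 {R d}.
Arguments enorm_sq {R d}. Arguments dotC {R d}. Arguments dot_eq0 {R d}.
Arguments dot0l {R d}. Arguments dotDr {R d}. Arguments dotNr {R d}.
Arguments dotBr {R d}. Arguments dotZr {R d}. Arguments dot_sumr {R d I}.
Arguments dot_CS {R d}. Arguments enormD {R d}. Arguments enormN {R d}.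
Arguments enormB {R d}. Arguments enorm0 {R d}. Arguments enormZ {R d}.
Arguments enorm_sum {R d I}.

Section Gen.
Variable R : realType.

Lemma derivable_cont (V : normedModType R) (f : R -> V) t :
  derivable f t 1 -> {for t, continuous f}.
Proof. by move=> df; apply/differentiable_continuous/derivable1_diffP. Qed.

Lemma der_cvg (V : normedModType R) (f : R -> V) (t : R) : derivable f t 1 ->
  h^-1 *: ((f \o shift t) (h *: 1) - f t) @[h --> 0^'] --> 'D_1 f t.
Proof. move=> df. exact: df. Qed.

Lemma der_cvg2 (f : R -> R) (t : R) : derivable f t 1 ->
  h^-1 * (f (h + t) - f t) @[h --> 0^'] --> 'D_1 f t.
Proof.
move=> df; have := @der_cvg _ f t df.
apply: cvg_trans; apply: near_eq_cvg; near=> h. by rewrite /= /GRing.scale /= mulr1.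
Unshelve. all: by end_near. Qed.

Lemma cvg2_der (f : R -> R) (t l : R) :
  h^-1 * (f (h + t) - f t) @[h --> 0^'] --> l -> is_derive t 1 f l.
Proof.
move=> H.
have H' : h^-1 *: ((f \o shift t) (h *: 1) - f t) @[h --> 0^'] --> l.
  apply: cvg_trans H; apply: near_eq_cvg; near=> h.
  by rewrite /= /GRing.scale /= mulr1.
have df : derivable f t 1 by apply/cvg_ex; exists l.
by apply: DeriveDef => //; exact: cvg_lim H'.
Unshelve. all: by end_near. Qed.

Lemma near_dnbhs_ex (P : R -> Prop) :
  (\forall h \near 0^', P h) -> exists2 e, 0 < e & forall h, `|h| < e -> h != 0 -> P h.
Proof.
move=> /nbhs_ballP [e e0 H]; exists e => // h he hn0; apply: H => //.
by rewrite /ball /= sub0r normrN.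
Qed.

Lemma Zlem (f k : R -> R) (t : R) : f t = 0 -> k t = 0 -> is_derive t 1 k 0 ->
  (forall s, `|f s| <= `|k s|) -> is_derive t 1 f 0.
Proof.
move=> ft kt [dk dk0] fk.
have hk := @der_cvg2 _ _ dk; rewrite dk0 in hk.
apply: cvg2_der.
apply/cvgrPdist_le => e e0; move/cvgrPdist_le: hk => /(_ e e0).
apply: filter_app; near=> h => H.
rewrite sub0r normrN in H; rewrite sub0r normrN; apply: le_trans H.
by rewrite ft kt !subr0 !normrM ler_wpM2l.
Unshelve. all: by end_near. Qed.

Lemma iso_zero (g : R -> R) (t c : R) : is_derive t 1 g c -> c != 0 -> g t = 0 ->
  exists2 e, 0 < e & forall s, `|s - t| < e -> s != t -> g s != 0.
Proof.
move=> [dg dgc] c0 gt0.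
have hq := @der_cvg2 _ _ dg; rewrite dgc in hq.
have cp : 0 < `|c| by rewrite normr_gt0.
move/cvgrPdist_lt: hq => /(_ _ cp) /near_dnbhs_ex [e e0 H].
exists e => // s hs hst.
have hn0 : s - t != 0 by rewrite subr_eq0.
have := H (s - t) hs hn0; rewrite gt0 subr0 subrK.
apply: contraTneq => ->; rewrite mulr0 subr0 ltxx //.
Qed.

Lemma fermat_pt (f : R -> R) (t : R) : derivable f t 1 -> (forall s, f t <= f s) ->
  'D_1 f t = 0.
Proof.
move=> df fmin.
have hq := @der_cvg2 _ _ df.
set D := 'D_1 f t in hq *.
have [Dp|Dn|//] := ltgtP D 0.
- have cp : 0 < `|D| by rewrite normr_gt0 lt_eqF.
  move/cvgrPdist_lt: hq => /(_ _ cp) /near_dnbhs_ex [e e0 H].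
  have e2 : 0 < e / 2 by rewrite divr_gt0.
  have := H (e / 2); rewrite gtr0_norm // gt_eqF // => /(_ _ isT).
  have -> : e / 2 < e by rewrite ltr_pdivrMr // ltr_pMr // ltr1n.
  move=> /(_ isT).
  have : 0 <= (e / 2)^-1 * (f (e / 2 + t) - f t).
    by apply: mulr_ge0; [rewrite invr_ge0 ltW | rewrite subr_ge0].
  set q := (e / 2)^-1 * _ => q0.
  move=> Hq; have Dq : D - q < 0 by lra.
  by move: Hq; rewrite (ltr0_norm Dp) (ltr0_norm Dq) => Hq; exfalso; lra.
- have cp : 0 < `|D| by rewrite normr_gt0 gt_eqF.
  move/cvgrPdist_lt: hq => /(_ _ cp) /near_dnbhs_ex [e e0 H].
  have e2 : 0 < e / 2 by rewrite divr_gt0.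
  have := H (- (e / 2)); rewrite normrN gtr0_norm // oppr_eq0 gt_eqF // => /(_ _ isT).
  have -> : e / 2 < e by rewrite ltr_pdivrMr // ltr_pMr // ltr1n.
  move=> /(_ isT).
  have : (- (e / 2))^-1 * (f (- (e / 2) + t) - f t) <= 0.
    by apply: mulr_le0_ge0; [rewrite invr_le0 oppr_le0 ltW | rewrite subr_ge0].
  set q := (- (e / 2))^-1 * _ => q0.
  move=> Hq; have Dq : 0 < D - q by lra.
  by move: Hq; rewrite (gtr0_norm Dn) (gtr0_norm Dq) => Hq; exfalso; lra.
Qed.

End Gen.
Arguments derivable_cont {R V f t}.
Arguments der_cvg2 {R f t}.
Arguments cvg2_der {R f t l}.
Arguments iso_zero {R g t c}.
Arguments fermat_pt {R f t}.

Section Gen3.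
Variable R : realType.

Definition consistent (S : R -> R -> Prop) :=
  (forall v c c', S v c -> S v c' -> c = c') /\ S 0 0.

Lemma max_split (x y : R) : Num.max x y = x + Num.max 0 (y - x).
Proof.
case: (boolP (x <= y)) => h.
  by rewrite max_r // max_r ?subr_ge0 // addrC subrK.
have h' : y < x by rewrite ltNge.
by rewrite max_l ?ltW // max_l ?addr0 // subr_le0 ltW.
Qed.

Lemma Max2 S (f g : R -> R) (t a b : R) : consistent S ->
  is_derive t 1 f a -> is_derive t 1 g b -> S (f t) a -> S (g t) b ->
  exists c, is_derive t 1 (fun s => Num.max (f s) (g s)) c /\
            S (Num.max (f t) (g t)) c.
Proof.
move=> [Sc S0] df dg Sa Sb.
have [df1 df2] := df; have [dg1 dg2] := dg.
have cf := derivable_cont df1; have cg := derivable_cont dg1.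
have -> : (fun s => Num.max (f s) (g s)) = f \max g by [].
case: (ltgtP (f t) (g t)) => [fg|gf|fg].
- exists b; split; last by [].
  apply: DeriveDef; first by apply: derivable_max => //; rewrite lt_eqF.
  by rewrite derive_maxr.
- exists a; split; last by [].
  apply: DeriveDef; first by apply: derivable_max => //; rewrite gt_eqF.
  by rewrite derive_maxl.
- have ab : a = b by apply: Sc Sa _; rewrite fg.
  exists a; split; last by [].
  have -> : f \max g = f + (fun s => Num.max 0 ((g - f) s)).
    by apply/funext => s /=; rewrite max_split.
  have gf0 : (g - f) t = 0 by rewrite -[(g - f) t]/(g t - f t) fg subrr.
  rewrite -[a]addr0; apply: is_deriveD.
  apply: (@Zlem _ _ (g - f)).
  + by rewrite gf0 maxxx.
  + exact: gf0.
  + by have := is_deriveB dg df; rewrite ab subrr.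
  + move=> s; case: (boolP (0 <= (g - f) s)) => h.
      by rewrite max_r.
    by rewrite max_l ?normr0 ?normr_ge0 // ltW // ltNge.
Qed.

Lemma MaxBig (I : Type) (r : seq I) (h : I -> R -> R) (dh : I -> R) S (t : R) :
  consistent S -> (forall i, is_derive t 1 (h i) (dh i)) ->
  (forall i, S (h i t) (dh i)) ->
  exists c, is_derive t 1 (fun s => \big[Num.max/0]_(i <- r) h i s) c /\
            S (\big[Num.max/0]_(i <- r) h i t) c.
Proof.
move=> Scons dh1 Sh; elim: r => [|a r [c [IH1 IH2]]].
  exists 0; rewrite big_nil; split; last by case: Scons.
  have -> : (fun s => \big[Num.max/0]_(i <- [::]) h i s) = cst 0.
    by apply/funext => s; rewrite big_nil.
  exact: is_derive_cst.
have [c' [H1 H2]] := @Max2 S (h a) _ t _ _ Scons (dh1 a) IH1 (Sh a) IH2.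
exists c'; split; last by rewrite big_cons.
have -> : (fun s => \big[Num.max/0]_(i <- a :: r) h i s) =
   (fun s => Num.max (h a s) (\big[Num.max/0]_(i <- r) h i s)).
  by apply/funext => s; rewrite big_cons.
exact: H1.
Qed.

Lemma isolated_countable (A : set R) :
  (forall t, A t -> exists2 e, 0 < e & forall s, A s -> `|s - t| < e -> s = t) ->
  countable A.
Proof.
move=> HA.
have H : forall t, exists q : rat, A t -> exists2 e, 0 < e &
    `|ratr q - t| < e / 2 /\ forall s, A s -> `|s - t| < e -> s = t.
  move=> t; have [At|nAt] := pselect (A t); last by exists 0.
  have [e e0 He] := HA t At.
  have e2 : 0 < e / 2 by rewrite divr_gt0.
  have [q Hq] : exists q : rat, ratr q \in `](t - e / 2), (t + e / 2)[.
    by apply: rat_in_itvoo; lra.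
  exists q => _; exists e => //; split => //.
  move: Hq; rewrite in_itv /= => /andP[h1 h2].
  rewrite ltr_norml; apply/andP; split; lra.
have [q Hq] := choice H.
apply/countable_injP; exists (fun t => pickle (q t)) => t1 t2 /[!inE] A1 A2 /(pcan_inj pickleK) E.
have [e1 e10 [H1 H1']] := Hq t1 A1.
have [e2 e20 [H2 H2']] := Hq t2 A2.
rewrite E in H1.
have D : `|t2 - t1| < e1 / 2 + e2 / 2.
  have -> : t2 - t1 = (ratr (q t2) - t1) - (ratr (q t2) - t2) by ring.
  apply: le_lt_trans (ler_normB _ _) _; exact: ltrD.
case: (lerP e2 e1) => e12.
  by apply/esym/H1' => //; apply: lt_le_trans D _; lra.
by apply: H2'; [| rewrite distrC; apply: lt_le_trans D _; lra].
Qed.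

Lemma within_comp (f : R -> R) (A : set R) (g : R -> R) (t : R) :
  {within A, continuous f} -> (forall s, A (g s)) -> {for t, continuous g} ->
  {for t, continuous (f \o g)}.
Proof.
move=> /subspace_continuousP fc Ag gc.
suff gA : g @ t --> within A (nbhs (g t)).
  exact: (cvg_comp g f gA (fc _ (Ag t))).
move=> P /= HP; rewrite /within /= in HP.
have HP' : \forall y \near g t, A y -> P y by exact: HP.
have H2 : \forall s \near t, A (g s) -> P (g s) := gc _ HP'.
apply: filterS H2 => s H; exact: H (Ag s).
Qed.

Lemma sum_cont (I : Type) (r : seq I) (P : pred I) (V : normedModType R)
  (F : I -> R -> V) (t : R) :
  (forall i, {for t, continuous (F i)}) ->
  {for t, continuous (fun s => \sum_(i <- r | P i) F i s)}.
Proof.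
move=> HF; elim: r => [|a r IH].
  have -> : (fun s => \sum_(i <- [::] | P i) F i s) = cst 0.
    by apply/funext => s; rewrite big_nil.
  exact: cst_continuous.
have -> : (fun s => \sum_(i <- a :: r | P i) F i s) =
   (fun s => (if P a then F a s else 0) + \sum_(i <- r | P i) F i s).
  apply/funext => s; rewrite big_cons; by case: (P a); rewrite ?add0r.
apply: continuousD => //.
case: (P a) => //; exact: cst_continuous.
Qed.

Lemma max_cont (I : Type) (r : seq I) (F : I -> R -> R) (t : R) :
  (forall i, {for t, continuous (F i)}) ->
  {for t, continuous (fun s => \big[Num.max/0]_(i <- r) F i s)}.
Proof.
move=> HF; elim: r => [|a r IH].
  have -> : (fun s => \big[Num.max/0]_(i <- [::]) F i s) = cst 0.
    by apply/funext => s; rewrite big_nil.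
  exact: cst_continuous.
have -> : (fun s => \big[Num.max/0]_(i <- a :: r) F i s) =
   (F a \max (fun s => \big[Num.max/0]_(i <- r) F i s)).
  by apply/funext => s; rewrite big_cons.
exact: continuous_max.
Qed.

End Gen3.
Arguments consistent {R}.

Section Gen4.
Variable R : realType.

Lemma comp_derive (d : nat) (f : R -> 'rV[R]_d) (t : R) (df : 'rV[R]_d) k :
  is_derive t 1 f df -> is_derive t 1 (fun s => f s ord0 k) (df ord0 k).
Proof.
move=> [H1 H2].
have Hk := (derivable_mxP f t 1).1 H1 ord0 k.
by apply: DeriveDef => //; rewrite -H2 derive_mx // mxE.
Qed.

Lemma comp_cont (d : nat) (f : R -> 'rV[R]_d) (t : R) k :
  {for t, continuous f} -> {for t, continuous (fun s => f s ord0 k)}.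
Proof.
move=> H; apply: (@continuous_comp _ _ _ f (fun M : 'rV[R]_d => M ord0 k)) => //.
exact: coord_continuous.
Qed.

Lemma is_derive_sumf (I : Type) (r : seq I) (P : pred I) (F : I -> R -> R)
  (dF : I -> R) (t : R) :
  (forall i, is_derive t 1 (F i) (dF i)) ->
  is_derive t 1 (fun s => \sum_(i <- r | P i) F i s) (\sum_(i <- r | P i) dF i).
Proof.
move=> HF; elim: r => [|a r IH].
  have -> : (fun s => \sum_(i <- [::] | P i) F i s) = cst 0.
    by apply/funext => s; rewrite big_nil.
  rewrite big_nil; exact: is_derive_cst.
have -> : (fun s => \sum_(i <- a :: r | P i) F i s) =
   (fun s => (if P a then F a s else 0) + \sum_(i <- r | P i) F i s).
  apply/funext => s; rewrite big_cons; by case: (P a); rewrite ?add0r.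
rewrite big_cons.
have -> : (if P a then dF a + \sum_(j <- r | P j) dF j else \sum_(j <- r | P j) dF j)
  = (if P a then dF a else 0) + \sum_(j <- r | P j) dF j.
  by case: (P a); rewrite ?add0r.
apply: is_deriveD => //.
case: (P a) => //; exact: is_derive_cst.
Qed.

Lemma is_derive_sq (f : R -> R) (t a : R) :
  is_derive t 1 f a -> is_derive t 1 (fun s => f s ^+ 2) (2 * f t * a).
Proof.
move=> H; have := is_deriveM H H.
have -> : (f * f) = (fun s => f s ^+ 2) by apply/funext => s; rewrite expr2.
move=> H'; apply: is_derive_eq H' _; rewrite /GRing.scale /=; ring.
Qed.

Lemma sqrt_max (a b : R) :
  Num.sqrt (Num.max a b) = Num.max (Num.sqrt a) (Num.sqrt b).
Proof.
case: (boolP (a <= b)) => h.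
  by rewrite !max_r // ler_wsqrtr.
have h' : b <= a by rewrite ltW // ltNge.
by rewrite !max_l // ler_wsqrtr.
Qed.

Lemma max_le_sum (I : Type) (r : seq I) (F : I -> R) :
  (forall i, 0 <= F i) ->
  \big[Num.max/0]_(i <- r) F i <= \sum_(i <- r) F i.
Proof.
move=> F0; elim: r => [|a r IH]; first by rewrite !big_nil.
rewrite !big_cons.
have S0 : 0 <= \sum_(i <- r) F i by apply: sumr_ge0.
case: (boolP (F a <= \big[Num.max/0]_(i <- r) F i)) => h.
  rewrite max_r //; apply: le_trans IH _; rewrite lerDr //.
have h' : \big[Num.max/0]_(i <- r) F i <= F a by rewrite ltW // ltNge.
by rewrite max_l // lerDl.
Qed.

Lemma le_bigmax0 (I : eqType) (r : seq I) (F : I -> R) i :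
  i \in r -> F i <= \big[Num.max/0]_(j <- r) F j.
Proof.
elim: r => [//|a r IH]; rewrite inE big_cons => /orP[/eqP ->|ir].
  by rewrite le_max lexx.
by rewrite le_max IH // orbT.
Qed.

Lemma bigmax0_ge0 (I : Type) (r : seq I) (F : I -> R) :
  0 <= \big[Num.max/0]_(j <- r) F j.
Proof.
elim: r => [|a r IH]; first by rewrite big_nil.
by rewrite big_cons le_max IH orbT.
Qed.

Lemma bigmax0_attained (I : Type) (r : seq I) (F : I -> R) :
  \big[Num.max/0]_(j <- r) F j = 0 \/
  exists2 i, List.In i r & \big[Num.max/0]_(j <- r) F j = F i.
Proof.
elim: r => [|a r IH]; first by left; rewrite big_nil.
rewrite big_cons.
case: (boolP (F a <= \big[Num.max/0]_(i <- r) F i)) => h.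
  rewrite max_r //; case: IH => [->|[i ir ->]]; [by left | right].
  by exists i => //=; right.
have h' : \big[Num.max/0]_(i <- r) F i <= F a by rewrite ltW // ltNge.
by rewrite max_l //; right; exists a => //=; left.
Qed.

Lemma bigmax0_le (I : Type) (r : seq I) (F : I -> R) (c : R) :
  0 <= c -> (forall i, F i <= c) -> \big[Num.max/0]_(j <- r) F j <= c.
Proof.
move=> c0 Fc; elim: r => [|a r IH]; first by rewrite big_nil.
by rewrite big_cons ge_max Fc IH.
Qed.

Lemma sumsq_le (I : Type) (r : seq I) (F : I -> R) :
  \sum_(i <- r) F i ^+ 2 <= (\sum_(i <- r) `|F i|) ^+ 2.
Proof.
elim: r => [|a r IH]; first by rewrite !big_nil expr0n.
rewrite !big_cons sqrrD -real_normK ?num_real //.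
have S0 : 0 <= \sum_(i <- r) `|F i| by apply: sumr_ge0.
have : 0 <= `|F a| * \sum_(i <- r) `|F i| by rewrite mulr_ge0.
lra.
Qed.

Lemma sumsq_le_pos (I : Type) (r : seq I) (F : I -> R) :
  (forall i, 0 <= F i) ->
  \sum_(i <- r) F i ^+ 2 <= (\sum_(i <- r) F i) ^+ 2.
Proof.
move=> F0; apply: le_trans (@sumsq_le _ r F) _.
by rewrite (eq_bigr F) // => i _; rewrite ger0_norm.
Qed.

End Gen4.
Arguments comp_derive {R d f t df} k.
Arguments is_derive_sumf {R I} r P {F dF t}.
Arguments le_bigmax0 {R I r} F {i}.
Arguments max_le_sum {R I} r F.
Arguments sumsq_le {R I} r F.
Arguments sumsq_le_pos {R I} r F.

Section Gen5.
Variable R : realType.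

Definition Zset (f df : R -> R) : set R :=
  [set t | 0 < t /\ f t = 0 /\ df t != 0 /\ is_derive t 1 f (df t)].

Lemma Zset_countable f df : countable (Zset f df).
Proof.
apply: isolated_countable => t [t0 [ft [dft Hd]]].
have [e e0 He] := iso_zero Hd dft ft.
exists e => // s [_ [fs _]] hs; apply/eqP; apply: contraTT isT => st.
by have := He s hs st; rewrite fs eqxx.
Qed.

End Gen5.

Section Gen6.
Variable R : realType.

Lemma cont_integrable (f : R -> R) (a b : R) :
  (forall s, a <= s <= b -> {for s, continuous f}) ->
  lebesgue_measure.-integrable `[a, b] (EFin \o f).
Proof.
move=> H; apply: continuous_compact_integrable; first exact: segment_compact.
apply: continuous_in_subspaceT => s; rewrite inE /= in_itv /= => hs.
exact: H.
Qed.

Lemma cont_within (f : R -> R) (a b : R) :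
  (forall s, a <= s <= b -> {for s, continuous f}) ->
  {within `[a, b], continuous f}.
Proof.
move=> H; apply: continuous_in_subspaceT => s; rewrite inE /= in_itv /= => hs.
exact: H.
Qed.

Arguments cont_within {f a b}.
Arguments cont_integrable {f a b}.

Lemma Rint_ge0 (f : R -> R) (a b : R) :
  (forall s, a <= s <= b -> 0 <= f s) ->
  0 <= \int[lebesgue_measure]_(s in `[a, b]) f s.
Proof.
move=> H; apply: Rintegral_ge0 => s; rewrite /= in_itv /=; exact: H.
Qed.

Lemma Rint_le (f1 f2 : R -> R) (a b : R) :
  (forall s, a <= s <= b -> {for s, continuous f1}) ->
  (forall s, a <= s <= b -> {for s, continuous f2}) ->
  (forall s, a <= s <= b -> f1 s <= f2 s) ->
  \int[lebesgue_measure]_(s in `[a, b]) f1 s <=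
  \int[lebesgue_measure]_(s in `[a, b]) f2 s.
Proof.
move=> c1 c2 H; apply: le_Rintegral.
- exact: measurable_itv.
- exact: cont_integrable.
- exact: cont_integrable.
- by move=> s; rewrite /= in_itv /=; exact: H.
Qed.

Lemma FTC2R (g g' : R -> R) (a b : R) : a < b ->
  (forall s, a <= s <= b -> is_derive s 1 g (g' s)) ->
  (forall s, a <= s <= b -> {for s, continuous g'}) ->
  \int[lebesgue_measure]_(s in `[a, b]) g' s = g b - g a.
Proof.
move=> ab Hd Hc.
have hab : a <= a <= b by rewrite lexx ltW.
have hbb : a <= b <= b by rewrite lexx ltW.
have := @continuous_FTC2 R g' g a b ab (cont_within Hc).
rewrite /Rintegral => ->.
- by [].
- split.
  + move=> s; rewrite in_itv /= => /andP[h1 h2].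
    have hs : a <= s <= b by rewrite !ltW.
    by have [] := Hd s hs.
  + apply: cvg_at_right_filter; apply: derivable_cont.
    by have [] := Hd a hab.
  + apply: cvg_at_left_filter; apply: derivable_cont.
    by have [] := Hd b hbb.
- move=> s; rewrite in_itv /= => /andP[h1 h2].
  have hs : a <= s <= b by rewrite !ltW.
  by rewrite derive1E; have [_ ->] := Hd s hs.
Qed.

Lemma MVI (d : nat) (f f' : R -> 'rV[R]_d) (B : R -> R) (a b : R) :
  a <= b ->
  (forall s, a <= s <= b -> is_derive s 1 f (f' s)) ->
  (forall s, a <= s <= b -> {for s, continuous f'}) ->
  (forall s, a <= s <= b -> {for s, continuous B}) ->
  (forall s, a <= s <= b -> enorm (f' s) <= B s) ->
  enorm (f b - f a) <= \int[lebesgue_measure]_(s in `[a, b]) B s.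
Proof.
move=> ab Hd Hc HB Hb.
have B0 : 0 <= \int[lebesgue_measure]_(s in `[a, b]) B s.
  apply: Rint_ge0 => s hs; apply: le_trans (Hb s hs); exact: enorm_ge0.
have [ab'|ab'] := eqVneq a b.
  by move: B0; rewrite ab' subrr enorm0.
have altb : a < b by rewrite lt_neqAle ab' ab.
set u := f b - f a.
pose gg s := dot u (f s).
pose gg' s := dot u (f' s).
have Hgd : forall s, a <= s <= b -> is_derive s 1 gg (gg' s).
  move=> s hs; rewrite /gg /gg' /dot.
  apply: (is_derive_sumf (index_enum 'I_d) xpredT) => k.
  have := is_deriveZ (u ord0 k) (comp_derive k (Hd s hs)).
  have -> : (u ord0 k \*: (fun s => f s ord0 k)) = (fun s => u ord0 k * f s ord0 k)
    by apply/funext.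
  by [].
have Hgc : forall s, a <= s <= b -> {for s, continuous gg'}.
  move=> s hs; rewrite /gg' /dot; apply: sum_cont => k.
  apply: continuousM; first exact: cst_continuous.
  exact: comp_cont (Hc s hs).
have E := @FTC2R gg gg' a b altb Hgd Hgc.
have E2 : gg b - gg a = enorm u ^+ 2.
  by rewrite /gg -dotBr enorm_sq.
have L : \int[lebesgue_measure]_(s in `[a, b]) gg' s <=
         \int[lebesgue_measure]_(s in `[a, b]) (enorm u * B s).
  apply: Rint_le => //.
    by move=> s hs; apply: continuousM => //; [exact: cst_continuous | exact: HB].
  move=> s hs; apply: le_trans (dot_CS _ _) _.
  by rewrite ler_wpM2l ?enorm_ge0 ?Hb.
rewrite RintegralZl in L; last exact: cont_integrable.
  2: exact: measurable_itv.
rewrite E E2 in L.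
have [u0|up] := eqVneq (enorm u) 0; first by rewrite u0.
have upos : 0 < enorm u by rewrite lt_def up enorm_ge0.
by rewrite expr2 ler_pM2l in L.
Qed.


Lemma Rint_sub (f : R -> R) (a x b : R) : a <= x -> x <= b ->
  (forall s, a <= s <= b -> {for s, continuous f}) ->
  (forall s, a <= s <= b -> 0 <= f s) ->
  \int[lebesgue_measure]_(s in `[a, x]) f s <= \int[lebesgue_measure]_(s in `[a, b]) f s.
Proof.
move=> ax xb Hc H0.
have := @Rintegral_itvB R f (BLeft a) (BRight b) x (cont_integrable Hc).
rewrite !bnd_simp => /(_ ax xb) E.
rewrite -subr_ge0 E; apply: Rintegral_ge0 => s; rewrite /= in_itv /= => /andP[h1 h2].
by apply: H0; rewrite h2 andbT (le_trans ax) // ltW.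
Qed.

Lemma P_der (f : R -> R) (c r : R) : c < r ->
  (forall s, c <= s <= r + 1 -> {for s, continuous f}) ->
  is_derive r 1 (fun y => \int[lebesgue_measure]_(t in `[c, y]) f t) (f r).
Proof.
move=> cr Hc.
have r1 : r < r + 1 by rewrite ltrDl.
have hr : c <= r <= r + 1 by rewrite !ltW.
have [H1 H2] := @continuous_FTC1_closed R f c r (r + 1) r1 (cont_integrable Hc) cr (Hc r hr).
by apply: DeriveDef => //; rewrite -derive1E.
Qed.

Lemma W_cont (f : R -> R) (c0 tau s0 : R) : 0 <= tau -> c0 < s0 - tau ->
  (forall s, c0 < s -> {for s, continuous f}) ->
  {for s0, continuous (fun s => \int[lebesgue_measure]_(r in `[s - tau, s]) f r)}.
Proof.
move=> tau0 cs Hc.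
have [t0|tp] := eqVneq tau 0.
  have -> : (fun s => \int[lebesgue_measure]_(r in `[s - tau, s]) f r) = cst 0.
    by apply/funext => s; rewrite t0 subr0 set_itv1 Rintegral_set1.
  exact: cst_continuous.
have tpos : 0 < tau by rewrite lt_def tp tau0.
pose c := (c0 + (s0 - tau)) / 2.
have c0c : c0 < c by rewrite /c; lra.
have ccs : c < s0 - tau by rewrite /c; lra.
pose P y := \int[lebesgue_measure]_(t in `[c, y]) f t.
have Pd : forall r, c < r -> is_derive r 1 P (f r).
  move=> r cr; apply: P_der => // s /andP[h1 h2]; apply: Hc; lra.
pose g s := P s - P (s - tau).
have Hg : {for s0, continuous g}.
  apply: continuousB.
    by apply: derivable_cont; have [] := Pd s0 _; first lra.
  apply: (@continuous_comp _ _ _ (fun r => r - tau) P).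
    by apply: continuousB => //; exact: cst_continuous.
  by apply: derivable_cont; have [] := Pd (s0 - tau) ccs.
have E : forall s, c < s - tau ->
    \int[lebesgue_measure]_(r in `[s - tau, s]) f r = g s.
  move=> s hs; apply: FTC2R; first lra.
    move=> r /andP[h1 h2]; apply: Pd; lra.
  move=> r /andP[h1 h2]; apply: Hc; lra.
have En : \forall s \near s0, g s = \int[lebesgue_measure]_(r in `[s - tau, s]) f r.
  near=> s; apply/esym/E.
  near: s; exists (s0 - tau - c); first by rewrite /= subr_gt0.
  move=> s /=; rewrite ltr_distlC => /andP[h1 h2]; lra.
apply: cvg_trans (near_eq_cvg En) _; rewrite /= (E s0 ccs); exact: Hg.
Unshelve. all: by end_near. Qed.


Lemma bigmin_le (I : eqType) (r : seq I) (F : I -> R) (x0 : R) p :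
  p \in r -> \big[Num.min/x0]_(i <- r) F i <= F p.
Proof.
elim: r => [//|a r IH]; rewrite inE big_cons => /orP[/eqP ->|pr].
  by rewrite ge_min lexx.
by rewrite ge_min IH // orbT.
Qed.

Lemma fmin_le (T : finType) (f : T -> R) p : fmin f <= f p.
Proof.
rewrite /fmin; case: pickP => [i0 _|H]; last by have := H p.
exact: bigmin_le (mem_index_enum p).
Qed.

End Gen6.


Section Gen7.
Variable R : realType.

Lemma sum_neq_const N (l : 'I_N) (c : R) :
  \sum_(m < N | m != l) c = (N.-1)%:R * c.
Proof. by rewrite sumr_const cardC1 card_ord mulr_natl. Qed.

Lemma sum_neq_full N (l : 'I_N) (F : 'I_N -> R) :
  F l = 0 -> \sum_(m < N | m != l) F m = \sum_(m < N) F m.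
Proof. by move=> Fl; rewrite [RHS](bigD1 l) //= Fl add0r. Qed.

Lemma side N d (u : 'rV[R]_d) (W E : 'I_N -> 'rV[R]_d) (b : 'I_N -> R)
  (amin K : R) (l : 'I_N) :
  (1 < N)%N -> (forall m, amin <= b m) -> (forall m, 0 <= b m) ->
  (forall m, b m <= (N.-1%:R)^-1) -> 0 <= K ->
  (forall m, dot u (W m) <= 0) -> (forall m, dot u (E m) <= K) ->
  \sum_(m < N | m != l) b m * (dot u (W m) + dot u (E m)) <=
  amin * \sum_(m < N | m != l) dot u (W m) + K.
Proof.
move=> HN ha hb0 hb1 K0 hW hE.
have Nm : 0 < (N.-1)%:R :> R by rewrite ltr0n; case: N HN {l b ha hb0 hb1 W E hW hE} => [|[|n]].
apply: (@le_trans _ _ (\sum_(m < N | m != l) (amin * dot u (W m) + (N.-1%:R)^-1 * K))).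
  apply: ler_sum => m _; rewrite mulrDr; apply: lerD.
    have := hW m; have := ha m; nra.
  have := hE m; have := hb0 m; have := hb1 m; nra.
rewrite big_split /= -mulr_sumr sum_neq_const mulrA mulfV ?mul1r //.
by rewrite gt_eqF.
Qed.

Lemma half N d (X Y Z : 'I_N -> 'rV[R]_d) (a : 'I_N -> 'I_N -> R)
  (amin D Et Es : R) (i j : 'I_N) :
  (1 < N)%N -> (forall l m, amin <= a l m) -> (forall l m, 0 <= a l m) ->
  (forall l m, a l m <= (N.-1%:R)^-1) ->
  (forall l m, enorm (X l - X m) <= D) -> enorm (X i - X j) = D ->
  (forall l, enorm (X l - Y l) <= Et) -> (forall l, enorm (X l - Z l) <= Es) ->
  dot (X i - X j) (\sum_(m < N | m != i) a i m *: (Y m - Z i)) <=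
  amin * \sum_(m < N) dot (X i - X j) (X m - X i) + D * (Et + Es).
Proof.
move=> HN ha hb0 hb1 hD hu hEt hEs.
set u := X i - X j.
have D0 : 0 <= D by rewrite -hu enorm_ge0.
have Et0 : 0 <= Et by apply: le_trans (hEt i); exact: enorm_ge0.
have Es0 : 0 <= Es by apply: le_trans (hEs i); exact: enorm_ge0.
rewrite dot_sumr.
have -> : \sum_(m < N | m != i) dot u (a i m *: (Y m - Z i)) =
   \sum_(m < N | m != i) a i m * (dot u (X m - X i) + dot u ((Y m - X m) - (Z i - X i))).
  apply: eq_bigr => m _; rewrite dotZr -dotDr; congr (_ * dot u _).
  by apply/matrixP => ? k; rewrite !mxE; ring.
rewrite -(@sum_neq_full _ i); last by rewrite subrr dotC dot0l // => k; rewrite mxE.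
apply: side => //.
- by rewrite mulr_ge0 // addr_ge0.
- move=> m.
  have -> : X m - X i = (X m - X j) - u by rewrite /u opprB addrA subrK.
  rewrite dotBr -enorm_sq hu.
  apply: le_trans (_ : D * D - D ^+ 2 <= 0); last by rewrite expr2 subrr.
  rewrite lerD2r; apply: le_trans (dot_CS _ _) _; rewrite hu.
  by rewrite ler_wpM2l.
- move=> m; apply: le_trans (dot_CS _ _) _; rewrite hu ler_wpM2l //.
  apply: le_trans (enormD _ _) _; rewrite enormN enormB (enormB (Z i)).
  exact: lerD.
Qed.

Lemma key_alg N d (X Y Z : 'I_N -> 'rV[R]_d) (a : 'I_N -> 'I_N -> R)
  (amin D Et Es : R) (i j : 'I_N) :
  (1 < N)%N -> (forall l m, amin <= a l m) -> (forall l m, 0 <= a l m) ->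
  (forall l m, a l m <= (N.-1%:R)^-1) ->
  (forall l m, enorm (X l - X m) <= D) -> enorm (X i - X j) = D ->
  (forall l, enorm (X l - Y l) <= Et) -> (forall l, enorm (X l - Z l) <= Es) ->
  dot (X i - X j) (\sum_(m < N | m != i) a i m *: (Y m - Z i) -
                   \sum_(m < N | m != j) a j m *: (Y m - Z j)) <=
  - (N%:R * amin * D ^+ 2) + 2 * (D * (Et + Es)).
Proof.
move=> HN ha hb0 hb1 hD hu hEt hEs.
have hu' : enorm (X j - X i) = D by rewrite enormB.
have H1 := @half N d X Y Z a amin D Et Es i j HN ha hb0 hb1 hD hu hEt hEs.
have H2 := @half N d X Y Z a amin D Et Es j i HN ha hb0 hb1 hD hu' hEt hEs.
set u := X i - X j.
have Eu : forall w, dot u w = - dot (X j - X i) w.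
  by move=> w; rewrite /u -opprB dotC dotNr dotC.
rewrite dotBr (Eu (\sum_(m < N | m != j) _)) opprK.
have S : \sum_(m < N) dot u (X m - X i) + \sum_(m < N) dot (X j - X i) (X m - X j)
    = - (N%:R * D ^+ 2).
  rewrite -big_split /=.
  have -> : \sum_(m < N) (dot u (X m - X i) + dot (X j - X i) (X m - X j)) =
            \sum_(m < N) (- D ^+ 2).
    apply: eq_bigr => m _; rewrite (Eu (X m - X i)) addrC -dotBr.
    have -> : (X m - X j) - (X m - X i) = - (X j - X i).
      by apply/matrixP => ? k; rewrite !mxE; ring.
    by rewrite dotNr -enorm_sq hu'.
  by rewrite sumr_const card_ord mulNrn mulr_natl.
have : dot u (\sum_(m < N | m != i) a i m *: (Y m - Z i)) +
       dot (X j - X i) (\sum_(m < N | m != j) a j m *: (Y m - Z j)) <=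
       amin * (\sum_(m < N) dot u (X m - X i) + \sum_(m < N) dot (X j - X i) (X m - X j))
       + 2 * (D * (Et + Es)).
  rewrite mulrDr; apply: le_trans (lerD H1 H2) _; rewrite -/u; lra.
by rewrite S mulrN mulrCA mulrA.
Qed.

End Gen7.

Section Sys.
Variables (R : realType) (N d : nat) (sigma tau : R) (psi : R -> R)
  (x : 'I_N -> R -> 'rV[R]_d).
Hypothesis HN : (2 <= N)%N.
Hypothesis Hs0 : 0 <= sigma.
Hypothesis Hst : sigma <= tau.
Hypothesis Hpsic : {within `[0, +oo[, continuous psi}.
Hypothesis Hpsi0 : forall r : R, 0 <= r -> 0 < psi r.
Hypothesis Hpsi1 : forall r : R, 0 <= r -> psi r <= 1.
Hypothesis Hxc : forall i, {within `[- tau, +oo[, continuous (x i)}.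

Definition v i t := \sum_(j < N | j != i)
   aij psi sigma tau x i j t *: (x j (t - tau) - x i (t - sigma)).

Hypothesis Hxd : forall i (t : R), 0 < t -> is_derive t 1 (x i) (v i t).

Lemma tau0 : 0 <= tau. Proof. exact: le_trans Hst. Qed.

Lemma sh1 (s : R) : 0 < s -> - tau < s - sigma.
Proof. move=> s0; have := tau0; move: Hst Hs0 s0; lra. Qed.
Lemma sh2 (s : R) : 0 < s -> - tau < s - tau.
Proof. move=> s0; move: s0; lra. Qed.

Lemma x_cont i s : - tau < s -> {for s, continuous (x i)}.
Proof.
move=> hs; have [H _] := (continuous_within_itvcyP _ _).1 (Hxc i).
by apply: H; rewrite in_itv /= hs.
Qed.

Lemma shift_cont (f : R -> 'rV[R]_d) (c s : R) :
  {for (s - c), continuous f} -> {for s, continuous (fun r => f (r - c))}.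
Proof.
move=> H; apply: (@continuous_comp _ _ _ (fun r => r - c) f) => //.
by apply: continuousB => //; exact: cst_continuous.
Qed.

Lemma enorm_cont (f : R -> 'rV[R]_d) (s : R) :
  {for s, continuous f} -> {for s, continuous (fun r => enorm (f r))}.
Proof.
move=> H; rewrite /enorm.
apply: (@continuous_comp _ _ _ (fun r => \sum_(k < d) f r ord0 k ^+ 2) Num.sqrt).
  apply: sum_cont => k; rewrite /=.
  have -> : (fun r => f r ord0 k ^+ 2) = (fun r => f r ord0 k * f r ord0 k).
    by apply/funext => r; rewrite expr2.
  by apply: continuousM; exact: comp_cont.
exact: sqrt_continuous.
Qed.

Lemma aij_cont i j s : 0 < s -> {for s, continuous (aij psi sigma tau x i j)}.
Proof.
move=> s0; rewrite /aij.
apply: continuousM; first exact: cst_continuous.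
have E : {for s, continuous (fun r => enorm (x i (r - sigma) - x j (r - tau)))}.
  apply: enorm_cont; apply: continuousB.
    apply: shift_cont; apply: x_cont; exact: sh1.
  apply: shift_cont; apply: x_cont; exact: sh2.
apply: (@within_comp _ psi _ (fun r => enorm (x i (r - sigma) - x j (r - tau)))
  s Hpsic) => //.
by move=> r /=; rewrite in_itv /= andbT enorm_ge0.
Qed.

Lemma v_cont i s : 0 < s -> {for s, continuous (v i)}.
Proof.
move=> s0; rewrite /v.
apply: sum_cont => j; apply: continuousZ; first exact: aij_cont.
apply: continuousB.
  apply: shift_cont; apply: x_cont; exact: sh2.
apply: shift_cont; apply: x_cont; exact: sh1.
Qed.

Definition maxv r := \big[Num.max/0]_(l < N) enorm (v l r).

Lemma maxv_cont s : 0 < s -> {for s, continuous maxv}.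
Proof.
move=> s0; apply: max_cont => l; apply: enorm_cont; exact: v_cont.
Qed.

Lemma diam_cont s : - tau < s -> {for s, continuous (diam x)}.
Proof.
move=> hs; rewrite /diam; apply: max_cont => i; apply: max_cont => j.
by apply: enorm_cont; apply: continuousB; apply: x_cont.
Qed.

Lemma maxvel_eq r : 0 < r -> maxvel x r = maxv r.
Proof.
move=> r0; rewrite /maxvel /maxv; apply: eq_bigr => l _.
by have [_ ->] := Hxd l r r0.
Qed.


Definition g i j k s := x i s ord0 k - x j s ord0 k.
Definition dg i j k t := v i t ord0 k - v j t ord0 k.
Definition Q i j := fun s => \sum_(k < d) g i j k s ^+ 2.
Definition dQ i j t := \sum_(k < d) 2 * g i j k t * dg i j k t.
Definition Mf s := \big[Num.max/0]_(i < N) \big[Num.max/0]_(j < N) Q i j s.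

Lemma g_der i j k (t : R) : 0 < t -> is_derive t 1 (g i j k) (dg i j k t).
Proof.
move=> t0; have := is_deriveB (comp_derive k (Hxd i t t0)) (comp_derive k (Hxd j t t0)).
by have -> : g i j k = (fun s => x i s ord0 k) - (fun s => x j s ord0 k)
  by apply/funext.
Qed.

Lemma Q_der i j (t : R) : 0 < t -> is_derive t 1 (Q i j) (dQ i j t).
Proof.
move=> t0; apply: is_derive_sumf => k; apply: is_derive_sq; exact: g_der.
Qed.

Lemma Q_ge0 i j s : 0 <= Q i j s.
Proof. by apply: sumr_ge0 => k _; exact: sqr_ge0. Qed.

Lemma Q0 i j s : Q i j s = 0 -> forall k, g i j k s = 0.
Proof.
move=> /eqP; rewrite psumr_eq0 => [/allP H k|k _]; last exact: sqr_ge0.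
by have := H k (mem_index_enum _); rewrite /= sqrf_eq0 => /eqP.
Qed.

Lemma dQ0 i j (t : R) : Q i j t = 0 -> dQ i j t = 0.
Proof. by move=> /Q0 H; apply: big1 => k _; rewrite H mulr0 mul0r. Qed.

Lemma enorm_Q i j s : enorm (x i s - x j s) = Num.sqrt (Q i j s).
Proof. by rewrite /enorm /Q; congr Num.sqrt; apply: eq_bigr => k _; rewrite !mxE. Qed.

Lemma diam_sqrt s : diam x s = Num.sqrt (Mf s).
Proof.
rewrite /diam /Mf (big_morph _ (@sqrt_max R) (@sqrtr0 R)); apply: eq_bigr => i _.
rewrite (big_morph _ (@sqrt_max R) (@sqrtr0 R)); apply: eq_bigr => j _.
exact: enorm_Q.
Qed.

Lemma diam_ge0 s : 0 <= diam x s.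
Proof. by rewrite diam_sqrt sqrtr_ge0. Qed.

Lemma Q_le_Mf i j s : Q i j s <= Mf s.
Proof.
rewrite /Mf; apply: le_trans (le_bigmax0 (fun i => \big[Num.max/0]_(j < N) Q i j s) (mem_index_enum i)).
exact: (le_bigmax0 (fun j => Q i j s) (mem_index_enum j)).
Qed.

Lemma enorm_le_diam i j s : enorm (x i s - x j s) <= diam x s.
Proof. by rewrite enorm_Q diam_sqrt ler_wsqrtr // Q_le_Mf. Qed.

Definition bad1 t := exists i j i' j', Q i j t = Q i' j' t /\ dQ i j t != dQ i' j' t.
Definition bad2 t := exists i j k, g i j k t = 0 /\ dg i j k t != 0.

Lemma Mf_der (t : R) : 0 < t -> ~ bad1 t -> exists c, is_derive t 1 Mf c.
Proof.
move=> t0 nb.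
pose S := fun val c : R => (val = 0 /\ c = 0) \/
  exists i j, val = Q i j t /\ c = dQ i j t.
have Sc : consistent S.
  split; last by left.
  move=> val c c' [[-> ->]|[i [j [-> ->]]]] [[v0 ->]|[i' [j' [E ->]]]] //.
  - by rewrite dQ0 // -E.
  - by rewrite dQ0.
  - apply/eqP; apply: contraT => ne; exfalso; apply: nb.
    by exists i, j, i', j'.
have inner : forall i, exists c : R, is_derive t 1
    (fun s => \big[Num.max/0]_(j <- index_enum 'I_N) Q i j s) c /\
    S (\big[Num.max/0]_(j <- index_enum 'I_N) Q i j t) c.
  move=> i; apply: (@MaxBig _ _ _ (fun j => Q i j) (fun j => dQ i j t)) => //.
    by move=> j; exact: Q_der.
  by move=> j; right; exists i, j.
have [cf Hcf] := choice inner.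
have [c [Hc _]] := @MaxBig _ _ (index_enum 'I_N)
  (fun i s => \big[Num.max/0]_(j <- index_enum 'I_N) Q i j s) cf S t Sc
  (fun i => (Hcf i).1) (fun i => (Hcf i).2).
by exists c.
Qed.

Lemma diam_der (t : R) : 0 < t -> ~ bad1 t -> ~ bad2 t -> derivable (diam x) t 1.
Proof.
move=> t0 nb1 nb2.
have [c Hc] := Mf_der t t0 nb1.
have Edm : diam x = Num.sqrt \o Mf by apply/funext => s; rewrite diam_sqrt.
have Mge0 : 0 <= Mf t by rewrite /Mf bigmax0_ge0.
have [Mp|Mn|M0] := ltgtP 0 (Mf t).
- rewrite Edm; have := is_derive1_comp (is_derive1_sqrt Mp) Hc.
  by case.
- by move: Mge0; rewrite leNgt Mn.
have gz : forall i j k, g i j k t = 0.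
  move=> i j k; apply: Q0; apply/eqP; rewrite eq_le Q_ge0 andbT M0.
  exact: Q_le_Mf.
have dgz : forall i j k, dg i j k t = 0.
  move=> i j k; apply/eqP; apply: contraT => ne; exfalso; apply: nb2.
  by exists i, j, k.
pose G s := \sum_(i < N) \sum_(j < N) \sum_(k < d) `|g i j k s|.
have Hk : forall i j k, is_derive t 1 (fun s => `|g i j k s|) 0.
  move=> i j k; apply: (@Zlem _ _ (g i j k)).
  - by rewrite gz normr0.
  - exact: gz.
  - by rewrite -(dgz i j k); exact: g_der.
  - by move=> s; rewrite normr_id.
have H3 : forall i j, is_derive t 1 (fun s => \sum_(k < d) `|g i j k s|) 0.
  move=> i j; apply: is_derive_eq (is_derive_sumf (index_enum 'I_d) xpredT (Hk i j)) _.
  exact: big1.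
have H2 : forall i, is_derive t 1 (fun s => \sum_(j < N) \sum_(k < d) `|g i j k s|) 0.
  move=> i; apply: is_derive_eq (is_derive_sumf (index_enum 'I_N) xpredT (H3 i)) _.
  exact: big1.
have GD : is_derive t 1 G 0.
  apply: is_derive_eq (is_derive_sumf (index_enum 'I_N) xpredT H2) _.
  exact: big1.
have G0 : forall s, 0 <= G s.
  by move=> s; apply: sumr_ge0 => i _; apply: sumr_ge0 => j _; apply: sumr_ge0.
apply: ex_derive; apply: (@Zlem _ _ G).
- by rewrite diam_sqrt -M0 sqrtr0.
- by apply: big1 => i _; apply: big1 => j _; apply: big1 => k _; rewrite gz normr0.
- move=> s; rewrite ger0_norm ?diam_ge0 // ger0_norm // diam_sqrt.
  rewrite -(ger0_norm (G0 s)) -sqrtr_sqr; apply: ler_wsqrtr.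
  apply: (@le_trans _ _ (\sum_(i < N) \sum_(j < N) Q i j s)).
    rewrite /Mf.
    have h1 := max_le_sum (index_enum 'I_N) (fun i => \big[Num.max/0]_(j < N) Q i j s)
      (fun i => @bigmax0_ge0 R _ (index_enum 'I_N) (fun j => Q i j s)).
    apply: le_trans h1 _.
    apply: ler_sum => i _; apply: max_le_sum => j; exact: Q_ge0.
  rewrite /G.
  have A : forall i, \sum_(j < N) Q i j s <=
      (\sum_(j < N) \sum_(k < d) `|g i j k s|) ^+ 2.
    move=> i; apply: le_trans _ (sumsq_le_pos _ _ _); last first.
      by move=> j; apply: sumr_ge0.
    by apply: ler_sum => j _; exact: sumsq_le.
  apply: le_trans _ (sumsq_le_pos _ _ _); last first.
    by move=> i; apply: sumr_ge0 => j _; apply: sumr_ge0.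
  by apply: ler_sum => i _; exact: A.
Qed.

Lemma Nm1 : 0 < (N.-1)%:R :> R.
Proof. by rewrite ltr0n; case: N HN => [|[|n]]. Qed.

Lemma aij_ge0 l m t : 0 <= aij psi sigma tau x l m t.
Proof.
rewrite /aij mulr_ge0 // ?invr_ge0 ?ler0n //.
by apply: ltW; apply: Hpsi0; exact: enorm_ge0.
Qed.

Lemma aij_le l m t : aij psi sigma tau x l m t <= (N.-1%:R)^-1.
Proof.
rewrite /aij -{2}(mulr1 (N.-1%:R)^-1) ler_wpM2l ?invr_ge0 ?ler0n //.
apply: Hpsi1; exact: enorm_ge0.
Qed.

Lemma amin_le l m t : amin psi sigma tau x t <= aij psi sigma tau x l m t.
Proof. exact: (@fmin_le R _ (fun p : 'I_N * 'I_N => aij psi sigma tau x p.1 p.2 t) (l, m)). Qed.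

Definition W s := \int[lebesgue_measure]_(r in `[s - tau, s]) maxv r.

Lemma maxv_ge0 r : 0 <= maxv r.
Proof. exact: bigmax0_ge0. Qed.

Lemma W_ge0 s : 0 <= W s.
Proof. by apply: Rint_ge0 => r _; exact: maxv_ge0. Qed.

Lemma Wc s : tau < s -> {for s, continuous W}.
Proof.
move=> ts; apply: (@W_cont _ _ 0) => //; first exact: tau0.
  by rewrite subr_gt0.
by move=> r r0; exact: maxv_cont.
Qed.

Lemma vle_maxv l r : enorm (v l r) <= maxv r.
Proof. exact: (le_bigmax0 (fun l => enorm (v l r)) (mem_index_enum l)). Qed.

Lemma xdiff_W l s : tau < s -> enorm (x l (s - tau) - x l (s - sigma)) <= W s.
Proof.
move=> ts; rewrite enormB.
have t0 := tau0.
have h1 : s - tau <= s - sigma by rewrite lerD2l lerN2.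
apply: le_trans (@MVI _ _ (x l) (v l) maxv (s - tau) (s - sigma) h1 _ _ _ _) _.
- move=> r /andP[r1 r2]; apply: Hxd; move: r1 ts; lra.
- move=> r /andP[r1 r2]; apply: v_cont; move: r1 ts; lra.
- move=> r /andP[r1 r2]; apply: maxv_cont; move: r1 ts; lra.
- by move=> r _; exact: vle_maxv.
apply: Rint_sub => //.
- by rewrite gerBl.
- move=> r /andP[r1 r2]; apply: maxv_cont; move: r1 ts; lra.
- by move=> r _; exact: maxv_ge0.
Qed.

Lemma vel_bound l s : tau < s -> enorm (v l s) <= diam x (s - tau) + W s.
Proof.
move=> ts; set K := diam x (s - tau) + W s.
have K0 : 0 <= K by rewrite addr_ge0 ?diam_ge0 ?W_ge0.
rewrite /v; apply: le_trans (enorm_sum _ _ _) _.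
apply: (@le_trans _ _ (\sum_(m < N | m != l) (N.-1%:R)^-1 * K)); last first.
  by rewrite sum_neq_const mulrA mulfV ?mul1r // gt_eqF // Nm1.
apply: ler_sum => m _; rewrite enormZ ger0_norm ?aij_ge0 //.
have E : enorm (x m (s - tau) - x l (s - sigma)) <= K.
  have -> : x m (s - tau) - x l (s - sigma) =
     (x m (s - tau) - x l (s - tau)) + (x l (s - tau) - x l (s - sigma)).
    by rewrite addrA subrK.
  apply: le_trans (enormD _ _) _; apply: lerD; first exact: enorm_le_diam.
  exact: xdiff_W.
apply: le_trans (_ : aij psi sigma tau x l m s * K <= _).
  by rewrite ler_wpM2l ?aij_ge0.
by rewrite ler_wpM2r ?aij_le.
Qed.

Lemma xdiff_bound l t h : 2 * tau < t -> 0 <= h -> h <= tau ->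
  enorm (x l t - x l (t - h)) <=
  \int[lebesgue_measure]_(s in `[t - h, t]) diam x (s - tau) +
  \int[lebesgue_measure]_(s in `[t - h, t]) W s.
Proof.
move=> tt h0 ht.
have t0 := tau0.
have c1 : forall s, t - h <= s <= t -> {for s, continuous (fun s => diam x (s - tau))}.
  move=> s /andP[s1 s2]; apply: (@continuous_comp _ _ _ (fun r => r - tau) (diam x)).
    by apply: continuousB => //; exact: cst_continuous.
  apply: diam_cont; move: s1 tt ht; lra.
have c2 : forall s, t - h <= s <= t -> {for s, continuous W}.
  move=> s /andP[s1 s2]; apply: Wc; move: s1 tt ht; lra.
rewrite -RintegralD; first last.
- exact: cont_integrable.
- exact: cont_integrable.
- exact: measurable_itv.
apply: MVI.
- by rewrite gerBl.
- move=> s /andP[s1 s2]; apply: Hxd; move: s1 tt ht; lra.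
- move=> s /andP[s1 s2]; apply: v_cont; move: s1 tt ht; lra.
- by move=> s hs; apply: continuousD; [exact: c1 | exact: c2].
- move=> s /andP[s1 s2]; apply: vel_bound; move: s1 tt ht; lra.
Qed.

Lemma inner_eq (t a : R) : 2 * tau < t -> t - tau <= a ->
  \int[lebesgue_measure]_(s in `[a, t])
     (\int[lebesgue_measure]_(r in `[s - tau, s]) maxvel x r) =
  \int[lebesgue_measure]_(s in `[a, t]) W s.
Proof.
move=> tt ta; apply: eq_Rintegral => s; rewrite inE /= in_itv /= => /andP[s1 s2].
apply: eq_Rintegral => r; rewrite inE /= in_itv /= => /andP[r1 r2].
apply: maxvel_eq; move: r1 s1 ta tt; lra.
Qed.

Lemma diam_cases t : diam x t = 0 \/ exists i j, diam x t = enorm (x i t - x j t).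
Proof.
rewrite /diam.
case: (@bigmax0_attained R _ (index_enum 'I_N)
  (fun i => \big[Num.max/0]_(j < N) enorm (x i t - x j t))) => [->|[i _ ->]].
  by left.
case: (@bigmax0_attained R _ (index_enum 'I_N) (fun j => enorm (x i t - x j t))) => [->|[j _ ->]].
  by left.
by right; exists i, j.
Qed.

Lemma main_ineq t : 2 * tau < t -> derivable (diam x) t 1 ->
     'D_1 (diam x) t <=
       2 * (\int[lebesgue_measure]_(s in `[t - tau, t]) diam x (s - tau))
     + 2 * (\int[lebesgue_measure]_(s in `[t - sigma, t]) diam x (s - tau))
     + 2 * (\int[lebesgue_measure]_(s in `[t - tau, t])
              (\int[lebesgue_measure]_(r in `[s - tau, s]) maxvel x r))
     + 2 * (\int[lebesgue_measure]_(s in `[t - sigma, t])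
              (\int[lebesgue_measure]_(r in `[s - tau, s]) maxvel x r))
     - N%:R * amin psi sigma tau x t * diam x t.
Proof.
move=> tt dd.
have t0 := tau0.
have tpos : 0 < t by move: tt t0; lra.
rewrite inner_eq // ?lexx // inner_eq //; last by rewrite lerD2l lerN2.
set I1 := \int[lebesgue_measure]_(s in `[t - tau, t]) diam x (s - tau).
set I2 := \int[lebesgue_measure]_(s in `[t - sigma, t]) diam x (s - tau).
set I3 := \int[lebesgue_measure]_(s in `[t - tau, t]) W s.
set I4 := \int[lebesgue_measure]_(s in `[t - sigma, t]) W s.
have I10 : 0 <= I1 by apply: Rint_ge0 => s _; exact: diam_ge0.
have I20 : 0 <= I2 by apply: Rint_ge0 => s _; exact: diam_ge0.
have I30 : 0 <= I3 by apply: Rint_ge0 => s _; exact: W_ge0.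
have I40 : 0 <= I4 by apply: Rint_ge0 => s _; exact: W_ge0.
have [D0|[i [j Dij]]] := diam_cases t.
  have -> : 'D_1 (diam x) t = 0.
    by apply: fermat_pt => // s; rewrite D0 diam_ge0.
  rewrite D0 mulr0 subr0; lra.
have [Dz|Dp] := eqVneq (diam x t) 0.
  have -> : 'D_1 (diam x) t = 0.
    by apply: fermat_pt => // s; rewrite Dz diam_ge0.
  rewrite Dz mulr0 subr0; lra.
have Dpos : 0 < diam x t by rewrite lt_def Dp diam_ge0.
set D := diam x t in Dij Dp Dpos *.
set D' := 'D_1 (diam x) t.
have hd2 : is_derive t 1 (fun s => diam x s ^+ 2) (2 * diam x t * D').
  by apply: is_derive_sq; exact: derivableP.
have hQ := Q_der i j t tpos.
have hh := is_deriveB hd2 hQ.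
have Hz : 'D_1 ((fun s => diam x s ^+ 2) - Q i j) t = 0.
  apply: fermat_pt; first by case: hh.
  move=> s.
  rewrite -[(_ - Q i j) t]/(diam x t ^+ 2 - Q i j t) -[(_ - Q i j) s]/(diam x s ^+ 2 - Q i j s).
  rewrite -/D Dij enorm_Q sqr_sqrtr ?Q_ge0 // subrr subr_ge0.
  rewrite -[Q i j s]sqr_sqrtr ?Q_ge0 // -enorm_Q.
  by rewrite lerXn2r ?nnegrE ?enorm_ge0 ?diam_ge0 // enorm_le_diam.
have E1 : 2 * D * D' = dQ i j t.
  by move: Hz; have [_ ->] := hh; move=> /eqP; rewrite subr_eq0 -/D => /eqP.
have E2 : dQ i j t = 2 * dot (x i t - x j t) (v i t - v j t).
  rewrite /dQ /dot mulr_sumr; apply: eq_bigr => k _.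
  by rewrite /g /dg !mxE; ring.
set Et := I1 + I3.
set Es := I2 + I4.
have hEt : forall l, enorm (x l t - x l (t - tau)) <= Et.
  by move=> l; apply: xdiff_bound => //; rewrite lexx.
have hEs : forall l, enorm (x l t - x l (t - sigma)) <= Es.
  by move=> l; apply: xdiff_bound.
have K := @key_alg R N d (fun l => x l t) (fun l => x l (t - tau))
  (fun l => x l (t - sigma)) (fun l m => aij psi sigma tau x l m t)
  (amin psi sigma tau x t) D Et Es i j HN
  (fun l m => amin_le l m t) (fun l m => aij_ge0 l m t) (fun l m => aij_le l m t)
  (fun l m => enorm_le_diam l m t) (esym Dij) hEt hEs.
rewrite -/(v i t) -/(v j t) in K.
have Kd : dot (x i t - x j t) (v i t - v j t) = D * D'.
  apply: (@mulfI _ 2); first by rewrite pnatr_eq0.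
  by rewrite -E2 -E1 mulrA.
have H3 : D * D' <= D * (- (N%:R * amin psi sigma tau x t * D) + 2 * (Et + Es)).
  rewrite -Kd; apply: le_trans K _; rewrite le_eqVlt; apply/orP; left; apply/eqP.
  rewrite expr2; ring.
rewrite ler_pM2l // in H3.
apply: le_trans H3 _; rewrite /Et /Es; lra.
Qed.

Definition B1 := \bigcup_(p in [set: ('I_N * 'I_N) * ('I_N * 'I_N)])
  @Zset R (fun s => Q p.1.1 p.1.2 s - Q p.2.1 p.2.2 s)
       (fun s => dQ p.1.1 p.1.2 s - dQ p.2.1 p.2.2 s).
Definition B2 := \bigcup_(p in [set: 'I_N * 'I_N * 'I_d])
  @Zset R (g p.1.1 p.1.2 p.2) (dg p.1.1 p.1.2 p.2).

Lemma B12_countable : countable (B1 `|` B2).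
Proof.
rewrite -bigcup2E; apply: bigcup_countable; first exact: countableP.
move=> [|[|n]] _ /=.
- apply: bigcup_countable; first exact: countableP.
  move=> p _; exact: Zset_countable.
- apply: bigcup_countable; first exact: countableP.
  move=> p _; exact: Zset_countable.
- exact: countable0.
Qed.

Lemma bad_sub t : 0 < t -> bad1 t \/ bad2 t -> (B1 `|` B2) t.
Proof.
move=> t0 [[i [j [i' [j' [E ne]]]]]|[i [j [k [gz ne]]]]].
  left; exists ((i, j), (i', j')) => //=; split => //; split.
    by rewrite E subrr.
  split; first by rewrite subr_eq0.
  exact: is_deriveB (Q_der i j t t0) (Q_der i' j' t t0).
right; exists (i, j, k) => //=; split => //; split => //; split => //.
exact: g_der.
Qed.

Lemma final :
  {ae (@lebesgue_measure R), forall t : R, 2 * tau < t ->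
     derivable (diam x) t 1 /\
     'D_1 (diam x) t <=
       2 * (\int[lebesgue_measure]_(s in `[t - tau, t]) diam x (s - tau))
     + 2 * (\int[lebesgue_measure]_(s in `[t - sigma, t]) diam x (s - tau))
     + 2 * (\int[lebesgue_measure]_(s in `[t - tau, t])
              (\int[lebesgue_measure]_(r in `[s - tau, s]) maxvel x r))
     + 2 * (\int[lebesgue_measure]_(s in `[t - sigma, t])
              (\int[lebesgue_measure]_(r in `[s - tau, s]) maxvel x r))
     - N%:R * amin psi sigma tau x t * diam x t}.
Proof.
exists (B1 `|` B2); split.
- apply: countable_measurable; last exact: B12_countable.
  by move=> r; exact: measurable_set1.
- exact: countable_lebesgue_measure0 B12_countable.
move=> t /= Hn.
have t0 := tau0.
have [tt|tt] := ltP (2 * tau) t; last first.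
  by exfalso; apply: Hn => h; move: h tt; rewrite leNgt => ->.
have tpos : 0 < t by move: tt t0; lra.
apply: bad_sub => //.
apply: contrapT => nb; apply: Hn => _.
have nb1 : ~ bad1 t by move=> b; apply: nb; left.
have nb2 : ~ bad2 t by move=> b; apply: nb; right.
have dd := diam_der t tpos nb1 nb2.
split => //; exact: main_ineq.
Qed.

End Sys.

Theorem lemma3p2 (R : realType) (N d : nat) (sigma tau : R) (psi : R -> R)
  (x : 'I_N -> R -> 'rV[R]_d) :
  (2 <= N)%N -> (1 <= d)%N ->
  0 <= sigma -> sigma <= tau ->
  {within `[0, +oo[, continuous psi} ->
  (forall r s : R, 0 <= r -> r <= s -> psi s <= psi r) ->
  (forall r : R, 0 <= r -> 0 < psi r) ->
  (forall r : R, 0 <= r -> psi r <= 1) ->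
  (forall i, {within `[- tau, +oo[, continuous (x i)}) ->
  (forall i (t : R), 0 < t ->
     is_derive t 1 (x i)
       (\sum_(j < N | j != i)
          aij psi sigma tau x i j t *: (x j (t - tau) - x i (t - sigma)))) ->
  {ae (@lebesgue_measure R), forall t : R, 2 * tau < t ->
     derivable (diam x) t 1 /\
     'D_1 (diam x) t <=
       2 * (\int[lebesgue_measure]_(s in `[t - tau, t]) diam x (s - tau))
     + 2 * (\int[lebesgue_measure]_(s in `[t - sigma, t]) diam x (s - tau))
     + 2 * (\int[lebesgue_measure]_(s in `[t - tau, t])
              (\int[lebesgue_measure]_(r in `[s - tau, s]) maxvel x r))
     + 2 * (\int[lebesgue_measure]_(s in `[t - sigma, t])
              (\int[lebesgue_measure]_(r in `[s - tau, s]) maxvel x r))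
     - N%:R * amin psi sigma tau x t * diam x t}.
Proof.
move=> HN _ Hs0 Hst Hpsic _ Hpsi0 Hpsi1 Hxc Hxd.
exact: (@final R N d sigma tau psi x HN Hs0 Hst Hpsic Hpsi0 Hpsi1 Hxc Hxd).
Qed.
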